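(* In the asynchronous online testing setting described in the context, suppose that the null $p$-values are independent of each other and of the non-null $p$-values, and that the test levels $\alpha_t$ (and candidacy thresholds $\lambda_t$) are monotone. Then $\mathrm{LORD}_{\mathrm{async}}$ and $\mathrm{SAFFRON}_{\mathrm{async}}$ with target level $\alpha$ both guarantee $\mathrm{FDR}(t)\le\alpha$ for all $t\in\mathbb{N}$.
   Context: Hypotheses $H_1,H_2,\dots$ are tested; the test of $H_t$ starts at step $t$ with test level $\alpha_t\ge0$ (and, for SAFFRON-type procedures, a candidacy threshold $\lambda_t$ with $\alpha_t\le\lambda_t<1$) and produces a $p$-value $P_t$; if $H_t$ is a true null, $P_t$ is super-uniform: $\mathbb{P}(P_t\le u)\le u$ for all $u\in[0,1]$. $\mathcal{H}^0$ is the fixed set of true null indices. Test $t$ has a fixed decision time $E_t\ge t$. For each step $s$, let $\mathcal{R}_s=\{i\in[s]: E_i=s,\ P_i\le\alpha_i\}$ and $\mathcal{C}_s=\{i\in[s]:E_i=s,\ P_i\le\lambda_i\}$. In $\mathrm{LORD}_{\mathrm{async}}$, $\alpha_t=f_t(\mathcal{R}_1,\dots,\mathcal{R}_{t-1})$ for deterministic functions $f_t$, chosen so that for all $t$, $\sum_{j\le t}\alpha_j\le\alpha\big((\sum_{j\le t}\mathbf{1}\{P_j\le\alpha_j,\ E_j<t\})\vee1\big)$. In $\mathrm{SAFFRON}_{\mathrm{async}}$, $\alpha_t=g_t(\mathcal{R}_1,\mathcal{C}_1,\dots,\mathcal{R}_{t-1},\mathcal{C}_{t-1})$ and $\lambda_t=h_t(\mathcal{R}_1,\mathcal{C}_1,\dots,\mathcal{R}_{t-1},\mathcal{C}_{t-1})$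 for deterministic $g_t,h_t$, chosen so that for all $t$, $\sum_{j\le t}\frac{\alpha_j}{1-\lambda_j}\big(\mathbf{1}\{P_j>\lambda_j,\ E_j<t\}+\mathbf{1}\{E_j\ge t\}\big)\le\alpha\big((\sum_{j\le t}\mathbf{1}\{P_j\le\alpha_j,\ E_j<t\})\vee1\big)$. Monotone means: each of $f_t$ (resp. $g_t,h_t$) does not decrease when any argument $\mathcal{R}_i$ (or $\mathcal{C}_i$) is replaced by a superset, the other arguments fixed. $\mathcal{R}(t)=\{i\in[t]:E_i\le t,\ P_i\le\alpha_i\}$, $\mathcal{V}(t)=\mathcal{R}(t)\cap\mathcal{H}^0$, and $\mathrm{FDR}(t)=\mathbb{E}\big[|\mathcal{V}(t)|/(|\mathcal{R}(t)|\vee1)\big]$. *)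

(* Defs.v *)
From HB Require Import structures.
From mathcomp Require Import all_boot all_order all_algebra.
From mathcomp Require Import all_classical all_reals all_analysis.
Set Implicit Arguments. Unset Strict Implicit. Unset Printing Implicit Defensive.
Import Order.TTheory GRing.Theory Num.Theory.
Local Open Scope classical_set_scope.
Local Open Scope ring_scope.

(* Hypotheses/tests are indexed by positive naturals 1, 2, 3, ...         *)
(* A "history" encodes a sequence of index sets (S_1, S_2, ...):           *)
(*   h s i = true  <->  i \in S_s.                                          *)
Definition history := nat -> nat -> bool.

Section Defs.
Context (R : realType) (d : measure_display) (Omega : measurableType d).

(* The history (R_1, ..., R_{t-1}) at sample point w, where                 *)
(*   R_s = { i in [s] : E_i = s, P_i <= thr_i }.                            *)
(* With thr = alpha this is (R_s)_{s<t}; with thr = lambda it is (C_s)_{s<t}. *)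
Definition hist_upto (E : nat -> nat) (p thr : nat -> Omega -> R) (t : nat)
  (w : Omega) : history :=
  fun s i => [&& (0 < s)%N, (s < t)%N, (0 < i)%N, (i <= s)%N, E i == s & p i w <= thr i w].

(* (Taking h, h' equal on the relevant entries shows F depends only on them.) *)
Definition hist_mono (t : nat) (F : history -> R) :=
  forall h h' : history,
    (forall s i, (0 < s)%N -> (s < t)%N -> (0 < i)%N -> (i <= s)%N -> h s i -> h' s i) ->
    F h <= F h'.

Definition hist_mono2 (t : nat) (F : history -> history -> R) :=
  forall h1 h2 h1' h2' : history,
    (forall s i, (0 < s)%N -> (s < t)%N -> (0 < i)%N -> (i <= s)%N -> h1 s i -> h1' s i) ->
    (forall s i, (0 < s)%N -> (s < t)%N -> (0 < i)%N -> (i <= s)%N -> h2 s i -> h2' s i) ->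
    F h1 h2 <= F h1' h2'.

Definition num_rej (E : nat -> nat) (p alpha : nat -> Omega -> R) (t : nat)
  (w : Omega) : R :=
  \sum_(1 <= i < t.+1) ((E i <= t)%N && (p i w <= alpha i w))%:R.

Definition num_false_rej (H0 : nat -> bool) (E : nat -> nat)
  (p alpha : nat -> Omega -> R) (t : nat) (w : Omega) : R :=
  \sum_(1 <= i < t.+1) [&& H0 i, (E i <= t)%N & p i w <= alpha i w]%:R.

Definition num_rej_before (E : nat -> nat) (p alpha : nat -> Omega -> R)
  (t : nat) (w : Omega) : R :=
  \sum_(1 <= j < t.+1) ((E j < t)%N && (p j w <= alpha j w))%:R.

Definition FDP (H0 : nat -> bool) (E : nat -> nat) (p alpha : nat -> Omega -> R)
  (t : nat) (w : Omega) : R :=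
  num_false_rej H0 E p alpha t w / Num.max (num_rej E p alpha t w) 1.

Definition FDR (Pr : probability Omega R) (H0 : nat -> bool) (E : nat -> nat)
  (p alpha : nat -> Omega -> R) (t : nat) : \bar R :=
  (\int[Pr]_w (FDP H0 E p alpha t w)%:E)%E.

Definition superuniform (Pr : probability Omega R) (X : Omega -> R) :=
  forall u : R, 0 <= u <= 1 -> (Pr [set w | (X w <= u)%R] <= u%:E)%E.

Definition nulls_independent (Pr : probability Omega R) (H0 : nat -> bool)
  (p : nat -> Omega -> R) :=
  forall (F G : seq nat) (B : nat -> set R),
    uniq F -> all H0 F -> all (fun j => ~~ H0 j) G ->
    (forall i, measurable (B i)) ->
    Pr (\big[setI/setT]_(i <- F ++ G) (p i @^-1` B i)) =
    ((\prod_(i <- F) Pr (p i @^-1` B i)) *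
       Pr (\big[setI/setT]_(j <- G) (p j @^-1` B j)))%E.

End Defs.

(* Main.v *)
Require Import Defs.
From HB Require Import structures.
From mathcomp Require Import all_boot all_order all_algebra.
From mathcomp Require Import all_classical all_reals all_analysis.
From mathcomp Require Import measurable_realfun.
Import Order.TTheory GRing.Theory Num.Theory.
Local Open Scope classical_set_scope.
Local Open Scope ring_scope.
Set Implicit Arguments. Unset Strict Implicit. Unset Printing Implicit Defensive.

Lemma in_bigcapS (T : Type) (s : seq nat) (F : nat -> set T) w :
  (\big[setI/setT]_(i <- s) F i) w <-> (forall i, i \in s -> F i w).
Proof.
elim: s => [|a s IH]; first by rewrite big_nil; split.
rewrite big_cons; split.
  move=> [Fa Fs] i; rewrite inE => /orP[/eqP -> //|iS]; by apply IH.
move=> H; split; first by apply: H; rewrite inE eqxx.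
by apply/IH => i iS; apply: H; rewrite inE iS orbT.
Qed.

Section Comb.
Context (R : realType) (d : measure_display) (Omega : measurableType d).
Variables (E : nat -> nat) (g k l : nat -> history -> history -> R).

Definition bvec := nat -> bool * bool.
Definition hR (t : nat) (bv : bvec) : history := fun s i =>
  [&& (0 < s)%N, (s < t)%N, (0 < i)%N, (i <= s)%N, E i == s & (bv i).1].
Definition hC (t : nat) (bv : bvec) : history := fun s i =>
  [&& (0 < s)%N, (s < t)%N, (0 < i)%N, (i <= s)%N, E i == s & (bv i).2].
Definition ga t bv := g t (hR t bv) (hC t bv).
Definition ka t bv := k t (hR t bv) (hC t bv).
Definition la t bv := l t (hR t bv) (hC t bv).
Definition outx (x : R) t bv : bool * bool := (x <= ga t bv, x <= ka t bv).

Lemma hR_local t bv bv' : (forall i, (0 < i)%N -> (i < t)%N -> bv i = bv' i) ->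
  hR t bv = hR t bv' /\ hC t bv = hC t bv'.
Proof.
move=> H; split; apply/funext=> s; apply/funext=> i; rewrite /hR /hC;
case s0: (0 < s)%N => //=; case st: (s < t)%N => //=;
case i0: (0 < i)%N => //=; case is_: (i <= s)%N => //=;
by rewrite H // (leq_ltn_trans is_ st).
Qed.

Lemma thr_local t bv bv' : (forall i, (0 < i)%N -> (i < t)%N -> bv i = bv' i) ->
  [/\ ga t bv = ga t bv', ka t bv = ka t bv' & la t bv = la t bv'].
Proof. by rewrite /ga /ka /la => /hR_local [-> ->]. Qed.

Lemma outx_local x t bv bv' : (forall i, (0 < i)%N -> (i < t)%N -> bv i = bv' i) ->
  outx x t bv = outx x t bv'.
Proof. by move=> /thr_local [e1 e2 _]; rewrite /outx e1 e2. Qed.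

Variable n : nat.
Definition vec := {ffun 'I_n -> bool * bool}.
Definition ext (γ : vec) : bvec := fun i =>
  if i is i'.+1 then (if @insub nat (fun x => (x < n)%N) 'I_n i' is Some o then γ o else (false,false))
  else (false,false).

Lemma ext_ord (γ : vec) (o : 'I_n) : ext γ (o : nat).+1 = γ o.
Proof.
rewrite /=; case: insubP => [u _ uo|]; first by rewrite (val_inj uo).
by rewrite ltn_ord.
Qed.

Lemma ext_out (γ : vec) i : ~~ ((0 < i) && (i <= n))%N -> ext γ i = (false,false).
Proof.
case: i => //= i; case: insubP => //= u ui _; by rewrite ui.
Qed.

Lemma ext_upd (γ : vec) (o : 'I_n) v i :
  ext [ffun o' => if o' == o then v else γ o'] i = if i == (o : nat).+1 then v else ext γ i.
Proof.
case: i => //= i; rewrite eqSS; case: insubP => [u ui uv|ui] /=.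
  by rewrite ffunE -val_eqE /= uv.
case: eqP => // io; by move: ui; rewrite io ltn_ord.
Qed.

Definition cons_set (q : nat -> Omega -> R) (γ : vec) : set Omega :=
  \big[setI/setT]_(i <- iota 1 n) [set w | outx (q i w) i (ext γ) = ext γ i].

Lemma cons_setP q γ w : cons_set q γ w <->
  (forall i, (0 < i)%N -> (i <= n)%N -> outx (q i w) i (ext γ) = ext γ i).
Proof.
rewrite /cons_set in_bigcapS; split=> H i.
  by move=> i0 iN; apply: H; rewrite mem_iota add1n ltnS i0 iN.
by rewrite mem_iota add1n ltnS => /andP[i0 iN]; apply: H.
Qed.

Lemma cons_exists q w : exists γ, cons_set q γ w.
Proof.
suff: forall m, (m <= n)%N -> exists γ : vec, forall i, (0 < i)%N -> (i <= m)%N ->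
    outx (q i w) i (ext γ) = ext γ i.
  by move=> /(_ n (leqnn n)) [γ H]; exists γ; apply/cons_setP.
elim=> [_|m IH mn]; first by exists [ffun=> (false,false)] => i i0 /(leq_trans i0).
have [γ Hγ] := IH (ltnW mn).
pose o : 'I_n := Ordinal mn.
pose γ' : vec := [ffun o' => if o' == o then outx (q m.+1 w) m.+1 (ext γ) else γ o'].
have eo : forall i, (i <= m.+1)%N -> outx (q i w) i (ext γ') = outx (q i w) i (ext γ).
  move=> i im; apply: outx_local => i' i'0 i'i.
  rewrite ext_upd /=; case: eqP => // e; by move: i'i im; rewrite e => /leq_trans H /H; rewrite ltnn.
exists γ' => i i0 im; rewrite eo // ext_upd /=.
case: eqP => [->//|/eqP ne]; apply: Hγ => //.
by move: im; rewrite leq_eqVlt (negbTE ne) /=.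
Qed.

Lemma cons_unique q w γ γ' : cons_set q γ w -> cons_set q γ' w -> γ = γ'.
Proof.
move=> /cons_setP H /cons_setP H'.
have e : forall i, ext γ i = ext γ' i.
  elim/ltn_ind=> i IH.
  case: (boolP ((0 < i) && (i <= n))%N) => [/andP[i0 iN]|ni]; last by rewrite !ext_out.
  rewrite -H // -H' //; apply: outx_local => i' _ /IH //.
by apply/ffunP => o; rewrite -!ext_ord e.
Qed.

Lemma cons_partition q w : \sum_(γ : vec) (\1_(cons_set q γ) w : R) = 1.
Proof.
have [γ0 H0] := cons_exists q w.
rewrite (bigD1 γ0) //= big1 ?addr0.
  by rewrite indicE mem_set.
move=> γ ne; rewrite indicE; case: (boolP (w \in cons_set q γ)) => // /set_mem Hw.
by move: ne; rewrite (cons_unique Hw H0) eqxx.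
Qed.

Lemma measurable_outx i bv v : measurable [set x : R | outx x i bv = v].
Proof.
have -> : [set x : R | outx x i bv = v] =
  ((fun x => x <= ga i bv) @^-1` [set v.1]) `&` ((fun x => x <= ka i bv) @^-1` [set v.2]).
  apply/seteqP; split => x /=; rewrite /outx.
    by move=> <-.
  by case: v => /= b1 b2 [-> ->].
apply: measurableI.
  by rewrite -[X in measurable X]setTI; apply: measurable_fun_ler => //; exact: measurable_cst.
by rewrite -[X in measurable X]setTI; apply: measurable_fun_ler => //; exact: measurable_cst.
Qed.

Lemma mcons_set q γ : (forall i, measurable_fun setT (q i)) -> measurable (cons_set q γ).
Proof.
move=> mq; apply: bigsetI_measurable => i _.
have -> : [set w | outx (q i w) i (ext γ) = ext γ i] = setT `&` q i @^-1` [set x | outx x i (ext γ) = ext γ i].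
  by rewrite setTI.
exact: mq (measurable_outx _ _ _).
Qed.

End Comb.


Section Indep.
Context (R : realType) (d : measure_display) (Omega : measurableType d).
Variables (Pr : probability Omega R) (p : nat -> Omega -> R) (H0 : nat -> bool).
Hypothesis Hind : nulls_independent Pr H0 p.

Lemma indep_split (n : nat) (B : nat -> set R) (C : set R) j :
  (0 < j)%N -> (j <= n)%N -> H0 j -> (forall i, measurable (B i)) -> measurable C ->
  Pr (\big[setI/setT]_(i <- iota 1 n) p i @^-1` (if i == j then C else B i)) =
  (Pr (p j @^-1` C) * Pr (\big[setI/setT]_(i <- iota 1 n) p i @^-1` (if i == j then setT else B i)))%E.
Proof.
move=> j0 jn Hj mB mC.
set s := iota 1 n.
have pFG : perm_eq ([seq x <- s | H0 x] ++ [seq x <- s | predC H0 x]) s.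
  by rewrite (perm_filterC H0 s s) perm_refl.
have js : j \in s by rewrite mem_iota add1n ltnS j0 jn.
have jF : j \in [seq x <- s | H0 x] by rewrite mem_filter Hj js.
have uF : uniq [seq x <- s | H0 x] by rewrite filter_uniq // iota_uniq.
have aF : all H0 [seq x <- s | H0 x] by apply/allP => x; rewrite mem_filter => /andP[].
have aG : all (fun x => ~~ H0 x) [seq x <- s | predC H0 x] by apply/allP => x; rewrite mem_filter => /andP[].
have mBB : forall c, measurable c -> forall i, measurable (if i == j then c else B i).
  by move=> c mc i; case: (i == j).
rewrite -!(perm_big _ pFG).
rewrite (Hind uF aF aG (mBB _ mC)) (Hind uF aF aG (mBB _ measurableT)).
rewrite !(bigD1_seq j jF uF) /= eqxx preimage_setT probability_setT mul1e.
have eG : \big[setI/setT]_(i <- [seq x <- s | predC H0 x]) p i @^-1` (if i == j then C else B i) =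
          \big[setI/setT]_(i <- [seq x <- s | predC H0 x]) p i @^-1` (if i == j then setT else B i).
  apply: eq_big_seq => i; rewrite mem_filter => /andP[/= nH _].
  by case: eqP => // e; move: nH; rewrite e Hj.
rewrite eG muleA; congr (_ * _)%E; congr (_ * _)%E.
apply: eq_bigr => i ij; by rewrite (negbTE ij).
Qed.

End Indep.


Section Main.
Context (R : realType) (d : measure_display) (Omega : measurableType d).
Variables (Pr : probability Omega R) (p : nat -> Omega -> R) (E : nat -> nat) (H0 : nat -> bool) (a : R).
Hypothesis mp : forall t, measurable_fun setT (p t).
Hypothesis HE : forall t, (t <= E t)%N.
Hypothesis Hsu : forall t, H0 t -> superuniform Pr (p t).
Hypothesis Hind : nulls_independent Pr H0 p.
Variables (g k l : nat -> history -> history -> R) (alpha kappa lam : nat -> Omega -> R).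
Hypothesis Hmono : forall t, (0 < t)%N -> hist_mono2 t (g t) /\ hist_mono2 t (k t).
Hypothesis Hpos : forall t hR hC, (0 < t)%N ->
  [/\ 0 <= g t hR hC, g t hR hC <= k t hR hC, 0 <= l t hR hC & l t hR hC < 1].
Hypothesis Halpha : forall t w, (0 < t)%N ->
  alpha t w = g t (hist_upto E p alpha t w) (hist_upto E p kappa t w).
Hypothesis Hkappa : forall t w, (0 < t)%N ->
  kappa t w = k t (hist_upto E p alpha t w) (hist_upto E p kappa t w).
Hypothesis Hlam : forall t w, (0 < t)%N ->
  lam t w = l t (hist_upto E p alpha t w) (hist_upto E p kappa t w).

Variable n : nat.

Local Notation GA := (ga E g).
Local Notation KA := (ka E k).
Local Notation LA := (la E l).
Local Notation OUT := (outx E g k).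
Local Notation CS := (@cons_set R d Omega E g k n).

Definition bo (w : Omega) : bvec := fun i => (p i w <= alpha i w, p i w <= kappa i w).
Definition go (w : Omega) : vec n := [ffun o : 'I_n => bo w (o : nat).+1].

Lemma ext_go w i : (0 < i)%N -> (i <= n)%N -> ext (go w) i = bo w i.
Proof.
case: i => // i _ iN.
by have := ext_ord (go w) (Ordinal iN); rewrite ffunE /= => ->.
Qed.

Lemma thr_go t w : (0 < t)%N -> (t <= n.+1)%N ->
  [/\ alpha t w = GA t (ext (go w)), kappa t w = KA t (ext (go w))
    & lam t w = LA t (ext (go w))].
Proof.
move=> t0 tn.
have [e1 e2 e3] := thr_local E g k l (bv := bo w) (bv' := ext (go w)) (t := t)
  (fun i i0 it => esym (ext_go w i0 (leq_trans it tn))).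
by rewrite -e1 -e2 -e3 Halpha // Hkappa // Hlam.
Qed.

Lemma go_cons w : CS p (go w) w.
Proof.
apply/cons_setP => i i0 iN.
have [e1 e2 _] := thr_go w i0 (leq_trans iN (leqnSn n)).
by rewrite ext_go // /outx -e1 -e2.
Qed.

Lemma go_unique w γ : CS p γ w -> γ = go w.
Proof. by move=> H; apply: (cons_unique l H (go_cons w)). Qed.

Lemma measurable_go (z : vec n -> R) : measurable_fun setT (fun w => z (go w)).
Proof.
have -> : (fun w => z (go w)) = (fun w => \sum_(γ <- index_enum (vec n)) (z γ * \1_(CS p γ) w)).
  apply/funext => w.
  rewrite (bigD1_seq (go w)) ?mem_index_enum ?index_enum_uniq //= indicE (mem_set (go_cons w)) mulr1.
  rewrite big1_seq ?addr0 // => γ /andP[ne _]; rewrite indicE.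
  case: (boolP (w \in CS p γ)) => [/set_mem /go_unique e|]; last by rewrite mulr0.
  by move: ne; rewrite e eqxx.
apply: measurable_sum => γ; apply: measurable_funM; first exact: measurable_cst.
by apply: measurable_indic; apply: mcons_set.
Qed.


Lemma thr_pos t bv : (0 < t)%N ->
  [/\ 0 <= GA t bv, GA t bv <= KA t bv, 0 <= LA t bv & LA t bv < 1].
Proof. by move=> t0; have := Hpos (hR E t bv) (hC E t bv) t0. Qed.

Definition q (j : nat) : nat -> Omega -> R := fun i w => if i == j then -1 else p i w.

Lemma mq j i : measurable_fun setT (q j i).
Proof. rewrite /q; case: (i == j) => //; exact: measurable_cst. Qed.

Lemma outx_m1 t bv : (0 < t)%N -> OUT (-1) t bv = (true, true).
Proof.
move=> t0; have [h1 h2 _ _] := thr_pos bv t0.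
rewrite /outx; congr pair; apply: (le_trans _ (le_trans h1 _)) => //; by rewrite lerN10.
Qed.

Lemma cs_q_j j γ w : (0 < j)%N -> (j <= n)%N -> CS (q j) γ w -> ext γ j = (true, true).
Proof.
move=> j0 jn /cons_setP H; rewrite -H // /q eqxx; exact: outx_m1.
Qed.

Lemma agree j γ w : (0 < j)%N -> (j <= n)%N -> CS (q j) γ w ->
  forall i, (i < j)%N || (p j w <= GA j (ext γ)) -> ext (go w) i = ext γ i.
Proof.
move=> j0 jn H; elim/ltn_ind => i IH cond.
case: (boolP ((0 < i) && (i <= n))%N) => [/andP[i0 iN]|ni]; last by rewrite !ext_out.
rewrite -((cons_setP E g k p (go w) w).1 (go_cons w) i i0 iN).
rewrite -((cons_setP E g k (q j) γ w).1 H i i0 iN).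
rewrite (outx_local E g k l (p i w) (t := i) (bv' := ext γ)); last first.
  move=> i' i'0 i'i; apply: IH => //; case/orP: cond => [ij|->]; last by rewrite orbT.
  by rewrite (ltn_trans i'i ij).
rewrite /q; case: eqP => [eij|_ //]; subst i.
rewrite ltnn /= in cond; rewrite outx_m1 //.
have [_ h2 _ _] := thr_pos (ext γ) j0.
by rewrite /outx cond (le_trans cond h2).
Qed.

Lemma thr_agree j γ w : (0 < j)%N -> (j <= n)%N -> CS (q j) γ w ->
  [/\ GA j (ext (go w)) = GA j (ext γ), KA j (ext (go w)) = KA j (ext γ)
    & LA j (ext (go w)) = LA j (ext γ)].
Proof.
move=> j0 jn H; apply: thr_local => i _ ij; apply: (agree j0 jn H); by rewrite ij.
Qed.

Lemma mono_c j γ w : (0 < j)%N -> (j <= n)%N -> CS (q j) γ w ->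
  forall i, ((ext (go w) i).1 ==> (ext γ i).1) && ((ext (go w) i).2 ==> (ext γ i).2).
Proof.
move=> j0 jn H; elim/ltn_ind => i IH.
case: (boolP ((0 < i) && (i <= n))%N) => [/andP[i0 iN]|ni]; last by rewrite !ext_out.
case: (eqVneq i j) => [->|ij]; first by rewrite (cs_q_j j0 jn H) !implybT.
rewrite -((cons_setP E g k p (go w) w).1 (go_cons w) i i0 iN).
rewrite -((cons_setP E g k (q j) γ w).1 H i i0 iN) /q (negbTE ij) /outx /=.
have [m1 m2] := Hmono i0.
have hsub : forall s i', (0 < s)%N -> (s < i)%N -> (0 < i')%N -> (i' <= s)%N ->
    hR E i (ext (go w)) s i' -> hR E i (ext γ) s i'.
  move=> s i' _ si _ i's; rewrite /hR => /and5P[-> -> -> -> /andP[-> h]] /=.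
  by have /andP[/implyP I _] := IH i' (leq_ltn_trans i's si); apply: I.
have hsub2 : forall s i', (0 < s)%N -> (s < i)%N -> (0 < i')%N -> (i' <= s)%N ->
    hC E i (ext (go w)) s i' -> hC E i (ext γ) s i'.
  move=> s i' _ si _ i's; rewrite /hC => /and5P[-> -> -> -> /andP[-> h]] /=.
  by have /andP[_ /implyP I] := IH i' (leq_ltn_trans i's si); apply: I.
have le1 := m1 _ _ _ _ hsub hsub2.
have le2 := m2 _ _ _ _ hsub hsub2.
apply/andP; split; apply/implyP => h.
  exact: (le_trans h le1).
exact: (le_trans h le2).
Qed.

Definition Dv (γ : vec n) : R :=
  Num.max (\sum_(1 <= i < n.+1) ((E i <= n)%N && (ext γ i).1)%:R) 1.

Lemma Dv_ge1 γ : 1 <= Dv γ.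
Proof. by rewrite /Dv le_max lexx orbT. Qed.

Lemma Dv_gt0 γ : 0 < Dv γ.
Proof. exact: (lt_le_trans ltr01 (Dv_ge1 γ)). Qed.

Lemma Dv_mono γ γ' : (forall i, (ext γ i).1 ==> (ext γ' i).1) -> Dv γ <= Dv γ'.
Proof.
move=> H; rewrite /Dv.
have s : \sum_(1 <= i < n.+1) ((E i <= n)%N && (ext γ i).1)%:R <=
         \sum_(1 <= i < n.+1) ((E i <= n)%N && (ext γ' i).1)%:R :> R.
  apply: ler_sum => i _; rewrite ler_nat.
  by have := H i; case: (E i <= n)%N; case: (ext γ i).1; case: (ext γ' i).1.
by rewrite ge_max !le_max s lexx !orbT.
Qed.

Lemma Dv_go w : Num.max (num_rej E p alpha n w) 1 = Dv (go w).
Proof.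
rewrite /num_rej /Dv; congr Num.max; apply: eq_big_nat => i /andP[i0 iN].
rewrite ext_go //.
Qed.

Definition X j w : R := ((ext (go w) j).1)%:R / Dv (go w).
Definition Sj j : set Omega := [set w | LA j (ext (go w)) < p j w].
Definition Y j w : R :=
  GA j (ext (go w)) / (1 - LA j (ext (go w))) / Dv (go w) * \1_(Sj j) w.

Lemma mX j : measurable_fun setT (X j).
Proof. exact: (measurable_go (fun γ => ((ext γ j).1)%:R / Dv γ)). Qed.

Lemma mSj j : measurable (Sj j).
Proof.
have -> : Sj j = setT `&` (fun w => LA j (ext (go w)) < p j w) @^-1` [set true].
  by rewrite setTI; apply/seteqP; split => w /=.
apply: measurable_fun_ltr => //; first exact: (measurable_go (fun γ => LA j (ext γ))).
Qed.

Lemma mY j : measurable_fun setT (Y j).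
Proof.
apply: measurable_funM; last exact: measurable_indic (mSj j).
exact: (measurable_go (fun γ => GA j (ext γ) / (1 - LA j (ext γ)) / Dv γ)).
Qed.

Lemma X_ge0 j w : 0 <= X j w.
Proof. by rewrite /X divr_ge0 // ltW // Dv_gt0. Qed.

Lemma Y_ge0 j w : (0 < j)%N -> 0 <= Y j w.
Proof.
move=> j0; have [h1 _ _ h4] := thr_pos (ext (go w)) j0.
rewrite /Y mulr_ge0 // ?indicE // divr_ge0 ?(ltW (Dv_gt0 _)) // divr_ge0 //.
by rewrite subr_ge0 ltW.
Qed.


Lemma mle (c : R) : measurable [set x : R | x <= c].
Proof.
rewrite -[X in measurable X]setTI.
by apply: (measurable_fun_ler (@measurable_id _ _ setT) (measurable_cst c)).
Qed.

Lemma mlt (c : R) : measurable [set x : R | c < x].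
Proof.
rewrite -[X in measurable X]setTI.
by apply: (measurable_fun_ltr (measurable_cst c) (@measurable_id _ _ setT)).
Qed.

Lemma mpre j C : measurable C -> measurable (p j @^-1` C).
Proof. by move=> mC; rewrite -[X in measurable X]setTI; exact: mp j measurableT C mC. Qed.

Lemma pw_X j γ w : (0 < j)%N -> (j <= n)%N ->
  \1_(CS (q j) γ) w * X j w =
  (Dv γ)^-1 * \1_(CS (q j) γ `&` p j @^-1` [set x | x <= GA j (ext γ)]) w.
Proof.
move=> j0 jn; rewrite !indicE.
case: (boolP (w \in CS (q j) γ)) => [/set_mem H|H]; last first.
  rewrite mul0r; case: (boolP (w \in _)) => [/set_mem [H' _]|_]; last by rewrite mulr0.
  by move: H; rewrite (mem_set H').
rewrite mul1r; have [e1 _ _] := thr_agree j0 jn H.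
case: (leP (p j w) (GA j (ext γ))) => hp.
  have ee : go w = γ.
    apply/ffunP => o; rewrite -!ext_ord; apply: (agree j0 jn H); by rewrite hp orbT.
  have Hin : (CS (q j) γ `&` p j @^-1` [set x | x <= GA j (ext γ)]) w by split.
  by rewrite (mem_set Hin) mulr1 /X ee (cs_q_j j0 jn H) /= div1r.
rewrite memNset ?mulr0; last by move=> [_ /=]; rewrite leNgt hp.
rewrite /X -((cons_setP E g k p (go w) w).1 (go_cons w) j j0 jn) /outx /= e1.
by rewrite leNgt hp mul0r.
Qed.

Lemma pw_Y j γ w : (0 < j)%N -> (j <= n)%N ->
  (GA j (ext γ) / (1 - LA j (ext γ)) / Dv γ) *
    \1_(CS (q j) γ `&` p j @^-1` [set x | LA j (ext γ) < x]) w
  <= \1_(CS (q j) γ) w * Y j w.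
Proof.
move=> j0 jn; rewrite !indicE.
case: (boolP (w \in _)) => [/set_mem [H hp]|_]; last first.
  by rewrite mulr0 mulr_ge0 ?Y_ge0 // ler0n.
rewrite (mem_set H) mul1r mulr1 /Y.
have [e1 _ e3] := thr_agree j0 jn H.
have Sw : Sj j w by rewrite /Sj /= e3.
rewrite indicE (mem_set Sw) mulr1 e1 e3.
have [h1 _ _ h4] := thr_pos (ext γ) j0.
apply: ler_wpM2l; first by rewrite divr_ge0 // subr_ge0 ltW.
rewrite lef_pV2 ?posrE ?Dv_gt0 //; apply: Dv_mono => i.
by have /andP[] := mono_c j0 jn H i.
Qed.

Lemma int_part (Z : Omega -> R) j : measurable_fun setT Z -> (forall w, 0 <= Z w) ->
  (\int[Pr]_w (Z w)%:E =
   \sum_(γ <- index_enum (vec n)) \int[Pr]_w (\1_(CS (q j) γ) w * Z w)%:E)%E.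
Proof.
move=> mZ Z0.
rewrite -ge0_integral_sum //.
- apply: eq_integral => w _; rewrite sumEFin -mulr_suml.
  by rewrite (cons_partition E g k l n (q j) w) mul1r.
- move=> γ; apply/measurable_EFinP; apply: measurable_funM => //.
  by apply: measurable_indic; apply: mcons_set; exact: mq.
- by move=> γ w _; rewrite lee_fin mulr_ge0 // indicE ler0n.
Qed.

Lemma int_ci (c : R) (A : set Omega) : 0 <= c -> measurable A ->
  (\int[Pr]_w (c * \1_A w)%:E = c%:E * Pr A)%E.
Proof.
move=> c0 mA.
under eq_integral do rewrite EFinM.
rewrite ge0_integralZl_EFin //; try (by move=> w _; rewrite lee_fin indicE ler0n).
all: try (by apply/measurable_EFinP; exact: measurable_indic).
by rewrite integral_indic // setIT.
Qed.

Lemma indep_cs j γ (C : set R) : (0 < j)%N -> (j <= n)%N -> H0 j -> measurable C ->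
  Pr (CS (q j) γ `&` p j @^-1` C) = (Pr (p j @^-1` C) * Pr (CS (q j) γ))%E.
Proof.
move=> j0 jn Hj mC.
case: (eqVneq (ext γ j) (true,true)) => [ej|nej]; last first.
  have -> : CS (q j) γ = set0.
    apply/seteqP; split => w // H; by move: nej; rewrite (cs_q_j j0 jn H) eqxx.
  by rewrite set0I measure0 mule0.
pose B := fun i => [set x : R | OUT x i (ext γ) = ext γ i].
have e1 : forall C, CS (q j) γ `&` p j @^-1` C =
    \big[setI/setT]_(i <- iota 1 n) p i @^-1` (if i == j then C else B i).
  move=> C'; apply/seteqP; split => w.
    move=> [/cons_setP H Cw]; apply/in_bigcapS => i; rewrite mem_iota add1n ltnS => /andP[i0 iN].
    rewrite /preimage /=; case: eqP => [->//|/eqP ij].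
    by have := H i i0 iN; rewrite /q (negbTE ij).
  move=> /in_bigcapS H; split.
    apply/cons_setP => i i0 iN; have := H i; rewrite mem_iota add1n ltnS i0 iN => /(_ isT).
    rewrite /q /preimage /=; case: eqP => [-> _|_ //]; rewrite ej; exact: outx_m1.
  by have := H j; rewrite mem_iota add1n ltnS j0 jn eqxx; apply.
have e2 : CS (q j) γ = CS (q j) γ `&` p j @^-1` setT by rewrite preimage_setT setIT.
rewrite e1 [in RHS]e2 e1; apply: (indep_split Hind) => //.
by move=> i; exact: measurable_outx.
Qed.

Lemma step5 j γ : (0 < j)%N -> (j <= n)%N -> H0 j ->
  (((Dv γ)^-1)%R%:E * (Pr (p j @^-1` [set x : R | (x <= GA j (ext γ))%R]) * Pr (CS (q j) γ)) <=
   (GA j (ext γ) / (1 - LA j (ext γ)) / Dv γ)%R%:E *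
     (Pr (p j @^-1` [set x : R | (LA j (ext γ) < x)%R]) * Pr (CS (q j) γ)))%E.
Proof.
move=> j0 jn Hj.
set c := GA j (ext γ); set lm := LA j (ext γ).
have [c0 _ l0 l1] := thr_pos (ext γ) j0.
have P1 : (Pr (p j @^-1` [set x : R | (x <= c)%R]) <= c%:E)%E.
  case: (leP c 1) => c1; first by apply: (Hsu Hj); rewrite c0 c1.
  apply: le_trans (probability_le1 _ (mpre j (mle c))) _.
  by rewrite lee_fin ltW.
have P2 : ((1 - lm)%R%:E <= Pr (p j @^-1` [set x : R | (lm < x)%R]))%E.
  have -> : p j @^-1` [set x : R | lm < x] = ~` (p j @^-1` [set x : R | x <= lm]).
    by apply/seteqP; split => w /=; rewrite ltNge => /negP.
  rewrite probability_setC; last exact: (mpre j (mle lm)).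
  rewrite EFinB leeB //.
  by apply: (Hsu Hj); rewrite l0 ltW.
have D0 : (0 <= ((Dv γ)^-1)%R%:E)%E by rewrite lee_fin invr_ge0 ltW // Dv_gt0.
have A0 := measure_ge0 Pr (CS (q j) γ).
apply: (le_trans (lee_wpmul2l D0 (lee_wpmul2r A0 P1))).
have -> : ((c / (1 - lm) / Dv γ)%R%:E = ((Dv γ)^-1)%R%:E * (c / (1 - lm))%R%:E)%E.
  by rewrite -EFinM mulrC.
rewrite -muleA; apply: lee_wpmul2l => //.
rewrite muleA; apply: lee_wpmul2r => //.
have l1' : 1 - lm != 0 by rewrite subr_eq0 eq_sym lt_eqF.
have -> : c%:E = ((c / (1 - lm))%R%:E * (1 - lm)%R%:E)%E by rewrite -EFinM divfK.
apply: lee_wpmul2l => //; rewrite lee_fin divr_ge0 // subr_ge0 ltW //.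
Qed.

Lemma main_j j : (0 < j)%N -> (j <= n)%N -> H0 j ->
  (\int[Pr]_w (X j w)%:E <= \int[Pr]_w (Y j w)%:E)%E.
Proof.
move=> j0 jn Hj.
rewrite (int_part j (mX j) (X_ge0 j)) (int_part j (mY j) (fun w => Y_ge0 w j0)).
apply: lee_sum => γ _.
under eq_integral do rewrite pw_X //.
have mCS : measurable (CS (q j) γ) by apply: mcons_set; exact: mq.
have [h1 _ _ h4] := thr_pos (ext γ) j0.
rewrite int_ci; last 2 first.
  by rewrite invr_ge0 ltW // Dv_gt0.
  by apply: measurableI => //; exact: mpre (mle _).
rewrite indep_cs //; last exact: mle.
apply: (le_trans (step5 γ j0 jn Hj)).
rewrite -indep_cs //; last exact: mlt.
rewrite -int_ci; last 2 first.
  by rewrite !divr_ge0 ?(ltW (Dv_gt0 _)) // subr_ge0 ltW.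
  by apply: measurableI => //; exact: mpre (mlt _).
apply: ge0_le_integral => //.
- move=> w _; rewrite lee_fin mulr_ge0 ?indicE ?ler0n //.
  by rewrite !divr_ge0 ?(ltW (Dv_gt0 _)) // subr_ge0 ltW.
- apply/measurable_EFinP; apply: measurable_funM; first exact: measurable_cst.
  by apply: measurable_indic; apply: measurableI => //; exact: mpre (mlt _).
- apply/measurable_EFinP; apply: measurable_funM; last exact: mY.
  exact: measurable_indic.
- by move=> w _; rewrite lee_fin; exact: pw_Y.
Qed.


Definition ee i : R := ((0 < i)%N && (E i <= n)%N)%:R.

Lemma FDP_eq w : FDP H0 E p alpha n w =
  \sum_(1 <= i < n.+1) ((H0 i && (E i <= n)%N)%:R * X i w).
Proof.
rewrite /FDP Dv_go /num_false_rej mulr_suml !big_nat; apply: eq_bigr => i /andP[i0 iN].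
rewrite /X ext_go // /bo /= mulrA; congr (_ * _).
by case: (H0 i); case: (E i <= n)%N; case: (_ <= _); rewrite /= ?mul1r ?mul0r.
Qed.

Lemma sumY_le w :
  (forall t w, (0 < t)%N ->
     \sum_(1 <= j < t.+1)
        alpha j w / (1 - lam j w) *
          (((E j < t)%N && (lam j w < p j w))%:R + (t <= E j)%N%:R)
       <= a * Num.max (num_rej_before E p alpha t w) 1) ->
  \sum_(1 <= i < n.+1) (ee i * Y i w) <= a.
Proof.
move=> Hb; have := Hb n.+1 w isT.
have Tpos : forall j, (0 < j)%N -> (j <= n.+1)%N -> 0 <= alpha j w / (1 - lam j w).
  move=> j j0 jn; have [e1 _ e3] := thr_go w j0 jn.
  have [h1 _ _ h4] := thr_pos (ext (go w)) j0.
  by rewrite e1 e3 divr_ge0 // subr_ge0 ltW.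
have eb : Num.max (num_rej_before E p alpha n.+1 w) 1 = Dv (go w).
  rewrite -Dv_go /num_rej_before big_nat_recr //=.
  rewrite ltnNge (HE n.+1) /= addr0 /num_rej; congr Num.max.
rewrite eb => hb.
have hs : \sum_(1 <= i < n.+1) (ee i * Y i w) =
    (\sum_(1 <= i < n.+1) alpha i w / (1 - lam i w) * ((E i < n.+1)%N && (lam i w < p i w))%:R) / Dv (go w).
  rewrite mulr_suml; apply: eq_big_nat => i /andP[i0 iN].
  have [e1 _ e3] := thr_go w i0 (ltnW iN).
  rewrite /ee /Y i0 ltnS indicE.
  have -> : (w \in Sj i) = (lam i w < p i w).
    by rewrite e3; apply/idP/idP => [/set_mem|H] //; exact: mem_set.
  rewrite -e1 -e3.
  case: (E i <= n)%N; rewrite /= ?mul0r ?mul1r ?mulr0 ?mul0r //.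
  by rewrite mulrAC.
rewrite hs ler_pdivrMr ?Dv_gt0 //; apply: le_trans hb.
rewrite [X in _ <= X]big_nat_recr //=.
apply: (@le_trans _ _ (\sum_(1 <= j < n.+1) alpha j w / (1 - lam j w) *
          (((E j < n.+1)%N && (lam j w < p j w))%:R + (n.+1 <= E j)%N%:R))).
  apply: ler_sum_nat => i /andP[i0 iN]; apply: ler_wpM2l; first by apply: Tpos => //; exact: ltnW.
  by rewrite lerDl.
rewrite lerDl; apply: mulr_ge0; first exact: Tpos.
by rewrite addr_ge0.
Qed.


Lemma gen_main :
  (forall t w, (0 < t)%N ->
     \sum_(1 <= j < t.+1)
        alpha j w / (1 - lam j w) *
          (((E j < t)%N && (lam j w < p j w))%:R + (t <= E j)%N%:R)
       <= a * Num.max (num_rej_before E p alpha t w) 1) ->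
  (FDR Pr H0 E p alpha n <= a%:E)%E.
Proof.
move=> Hb; rewrite /FDR.
under eq_integral do rewrite FDP_eq -sumEFin.
have mf : forall i, measurable_fun setT (fun w => ((H0 i && (E i <= n)%N)%:R * X i w)%:E).
  by move=> i; apply/measurable_EFinP; apply: measurable_funM; [exact: measurable_cst|exact: mX].
have f0 : forall i w, setT w -> (0 <= ((H0 i && (E i <= n)%N)%:R * X i w)%:E)%E.
  by move=> i w _; rewrite lee_fin mulr_ge0 ?ler0n ?X_ge0.
rewrite (ge0_integral_sum _ _ mf f0).
have mfY : forall i, measurable_fun setT (fun w => (ee i * Y i w)%:E).
  by move=> i; apply/measurable_EFinP; apply: measurable_funM; [exact: measurable_cst|exact: mY].
have f0Y : forall i w, setT w -> (0 <= (ee i * Y i w)%:E)%E.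
  move=> i w _; rewrite lee_fin /ee; case: (boolP (0 < i)%N) => i0 /=; last by rewrite mul0r.
  by rewrite mulr_ge0 ?ler0n ?Y_ge0.
apply: (@le_trans _ _ (\sum_(1 <= i < n.+1) \int[Pr]_w ((ee i * Y i w)%:E))%E).
  rewrite !big_nat; apply: lee_sum => i /andP[i0 iN].
  rewrite /ee i0 /=.
  case: (boolP (H0 i && (E i <= n)%N)) => [/andP[Hi Ei]|nh].
    rewrite Ei /=.
    under eq_integral do rewrite mul1r.
    under [X in (_ <= X)%E]eq_integral do rewrite mul1r.
    exact: main_j.
  under eq_integral do rewrite mul0r.
  rewrite integral0; apply: integral_ge0 => w _.
  by rewrite lee_fin mulr_ge0 ?ler0n ?Y_ge0.
rewrite -(ge0_integral_sum _ _ mfY f0Y).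
under eq_integral do rewrite sumEFin.
apply: (@le_trans _ _ (\int[Pr]_w (cst a%:E) w)%E).
  apply: ge0_le_integral => //.
  - move=> w _; rewrite lee_fin sumr_ge0 // => i _.
    by have := f0Y i w I; rewrite lee_fin.
  - apply/measurable_EFinP; apply: measurable_sum => i.
    by apply: measurable_funM; [exact: measurable_cst|exact: mY].
  - by move=> w _; rewrite lee_fin; exact: sumY_le.
rewrite integral_cst //.
rewrite -[X in (_ <= X)%E]mule1 le_eqVlt; apply/orP; left; apply/eqP; congr (_ * _)%E.
exact: probability_setT.
all: exact: measurableT.
Qed.

End Main.

Unset Implicit Arguments.


Theorem theorem3 (R : realType) (d : measure_display) (Omega : measurableType d)
  (Pr : probability Omega R) (p : nat -> Omega -> R) (E : nat -> nat)
  (H0 : nat -> bool) (a : R) :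
  (forall t, measurable_fun setT (p t)) ->
  (forall t, (t <= E t)%N) ->
  (forall t, H0 t -> superuniform Pr (p t)) ->
  nulls_independent Pr H0 p ->
  (* LORD_async *)
  (forall (f : nat -> history -> R) (alpha : nat -> Omega -> R),
     (forall t, (0 < t)%N -> hist_mono t (f t)) ->
     (forall t hR, (0 < t)%N -> 0 <= f t hR) ->
     (forall t w, (0 < t)%N -> alpha t w = f t (hist_upto E p alpha t w)) ->
     (forall t w, (0 < t)%N ->
        \sum_(1 <= j < t.+1) alpha j w
          <= a * Num.max (num_rej_before E p alpha t w) 1) ->
     forall t : nat, (FDR Pr H0 E p alpha t <= a%:E)%E)
  /\
  (* SAFFRON_async *)
  (forall (g h : nat -> history -> history -> R) (alpha lambda : nat -> Omega -> R),
     (forall t, (0 < t)%N -> hist_mono2 t (g t) /\ hist_mono2 t (h t)) ->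
     (forall t hR hC, (0 < t)%N -> 0 <= g t hR hC /\ g t hR hC <= h t hR hC /\ h t hR hC < 1) ->
     (forall t w, (0 < t)%N ->
        alpha t w = g t (hist_upto E p alpha t w) (hist_upto E p lambda t w)) ->
     (forall t w, (0 < t)%N ->
        lambda t w = h t (hist_upto E p alpha t w) (hist_upto E p lambda t w)) ->
     (forall t w, (0 < t)%N ->
        \sum_(1 <= j < t.+1)
           alpha j w / (1 - lambda j w) *
             (((E j < t)%N && (lambda j w < p j w))%:R + (t <= E j)%N%:R)
          <= a * Num.max (num_rej_before E p alpha t w) 1) ->
     forall t : nat, (FDR Pr H0 E p alpha t <= a%:E)%E).
Proof.
move=> mp HE Hsu Hind; split.
- move=> f alpha Hmono Hpos Halpha Hbound t.
  apply: (gen_main mp HE Hsu Hind (g := fun t hR _ => f t hR) (k := fun t hR _ => f t hR)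
            (l := fun _ _ _ => 0) (alpha := alpha) (kappa := alpha) (lam := fun _ _ => 0)).
  + move=> s s0; have Hm := Hmono s s0.
    by split => h1 h2 h1' h2' H1 _; apply: Hm.
  + move=> s hR hC s0; split => //; exact: Hpos.
  + by move=> s w s0; rewrite Halpha.
  + by move=> s w s0; rewrite Halpha.
  + by [].
  + move=> s w s0; apply: le_trans (Hbound s w s0).
    apply: ler_sum_nat => j /andP[j0 _].
    rewrite subr0 divr1; apply: ler_piMr.
      by rewrite Halpha //; exact: Hpos.
    by case: (ltnP (E j) s) => _; case: (0 < p j w)%R; rewrite /= ?addr0 ?add0r.
- move=> g h alpha lambda Hmono Hpos Halpha Hlam Hbound t.
  apply: (gen_main mp HE Hsu Hind (g := g) (k := h) (l := h)
            (alpha := alpha) (kappa := lambda) (lam := lambda)) => //.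
  move=> s hR hC s0; have [h1 [h2 h3]] := Hpos s hR hC s0.
  by split => //; exact: le_trans h2.
Qed.
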